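(* Let $X,Y$ be non-commuting indeterminates and $C=XYX^{-1}Y^{-1}$. Let $(R_n)_{n\in\mathbb Z}$ satisfy $$R_{2n}CR_{2n-2}=1+R_{2n-1},\qquad R_{2n+1}CR_{2n-1}=1+R_{2n}^4\qquad(n\in\mathbb Z),$$ with $R_1=YXY^{-1}$ and $R_2=Y$. Then for all $n\ge0$, $R_n$ is a Laurent polynomial in $X,Y$ with only non-negative integer coefficients.
   Context: Work in the free skew field (non-commutative rational functions) over $\mathbb C$ generated by $X,Y$. A Laurent polynomial in $X,Y$ is a $\mathbb Z$-linear combination of words in $X^{\pm1},Y^{\pm1}$. *)

(* Defs.v *)
From HB Require Import structures.
From mathcomp Require Import all_boot all_order all_algebra.
Set Implicit Arguments. Unset Strict Implicit. Unset Printing Implicit Defensive.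
Import Order.TTheory GRing.Theory Num.Theory.
Local Open Scope ring_scope.

(* A letter of the alphabet X^{±1}, Y^{±1}:
   (false, false) = X, (false, true) = X^-1, (true, false) = Y, (true, true) = Y^-1. *)
Definition letter := (bool * bool)%type.
Definition word := seq letter.

(* freely reduced words: no factor  a a^{-1}  *)
Fixpoint reduced (w : word) : bool :=
  match w with
  | a :: ((b :: _) as w') => ~~ ((a.1 == b.1) && (a.2 != b.2)) && reduced w'
  | _ => true
  end.

Section Eval.
Variable D : unitRingType.
Variables x y : D.

Definition eval_letter (l : letter) : D :=
  let g := if l.1 then y else x in if l.2 then g^-1 else g.

Definition eval_word (w : word) : D := \prod_(l <- w) eval_letter l.

Definition eval_nlaurent (s : seq (nat * word)) : D :=
  \sum_(p <- s) (p.1)%:R * eval_word p.2.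

(* x, y generate a copy of the integral free group ring Z[F_2] inside D:
   distinct reduced words are Z-linearly independent. *)
Definition free_group_ring_embeds : Prop :=
  forall s : seq (int * word),
    uniq (map snd s) -> all reduced (map snd s) ->
    \sum_(p <- s) (p.1)%:~R * eval_word p.2 = 0 ->
    all (fun p => p.1 == 0) s.
End Eval.

Definition is_division_ring (D : unitRingType) : Prop :=
  forall z : D, z != 0 -> z \is a GRing.unit.

(* Main.v *)
Require Import Defs.
From HB Require Import structures.
From mathcomp Require Import all_boot all_order all_algebra.
From mathcomp Require Import zify.
Import GRing.Theory.
Local Open Scope ring_scope.

Definition sym := (letter + nat)%type.
Definition sword := seq sym.
Definition poly := seq (int * sword).

Definition canc (a b : sym) : bool :=
  match a, b with
  | inl l1, inl l2 => (l1.1 == l2.1) && (l1.2 != l2.2)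
  | _, _ => false
  end.

Definition push (a : sym) (t : sword) : sword :=
  match t with
  | b :: t' => if canc a b then t' else a :: t
  | [::] => [:: a]
  end.

Definition red (w : sword) : sword := foldr push [::] w.

Fixpoint ins (c : int) (w : sword) (L : poly) : poly :=
  match L with
  | [::] => if c == 0 then [::] else [:: (c, w)]
  | (d, v) :: L' => if v == w then (if c + d == 0 then L' else (c + d, v) :: L')
                    else (d, v) :: ins c w L'
  end.

Definition norm (p : poly) : poly := foldr (fun q acc => ins q.1 (red q.2) acc) [::] p.

Definition popp (p : poly) : poly := map (fun q => (- q.1, q.2)) p.
Definition pmul (p q : poly) : poly := [seq (a.1 * b.1, a.2 ++ b.2) | a <- p, b <- q].
Fixpoint pexp (p : poly) (n : nat) : poly :=
  match n with 0 => [:: (1, [::])] | n'.+1 => pmul p (pexp p n') end.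

Inductive expr :=
| EAdd of expr & expr | EOpp of expr | EMul of expr & expr | EOne | EZero
| ELet of letter | EAtom of nat | EExp of expr & nat.

Fixpoint to_poly (e : expr) : poly :=
  match e with
  | EAdd a b => to_poly a ++ to_poly b
  | EOpp a => popp (to_poly a)
  | EMul a b => pmul (to_poly a) (to_poly b)
  | EOne => [:: (1, [::])]
  | EZero => [::]
  | ELet l => [:: (1, [:: inl l])]
  | EAtom i => [:: (1, [:: inr i])]
  | EExp a n => pexp (to_poly a) n
  end.

Section NC.
Variables (D : unitRingType) (x y : D).
Hypotheses (xu : x \is a GRing.unit) (yu : y \is a GRing.unit).
Variable env : seq D.

Definition ev_sym (a : sym) : D :=
  match a with inl l => eval_letter x y l | inr i => nth 0 env i end.
Definition evw (w : sword) : D := foldr (fun a r => ev_sym a * r) 1 w.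
Definition evp (p : poly) : D := foldr (fun q r => q.1%:~R * evw q.2 + r) 0 p.

Fixpoint eval (e : expr) : D :=
  match e with
  | EAdd a b => eval a + eval b
  | EOpp a => - eval a
  | EMul a b => eval a * eval b
  | EOne => 1
  | EZero => 0
  | ELet l => eval_letter x y l
  | EAtom i => nth 0 env i
  | EExp a n => eval a ^+ n
  end.

Lemma canc_ev a b : canc a b -> ev_sym a * ev_sym b = 1.
Proof.
case: a => [[a1 a2]|i]; case: b => [[b1 b2]|j] //=.
case/andP => /eqP <- /negPf; rewrite /eval_letter /=.
have gu : (if a1 then y else x) \is a GRing.unit by case: a1.
case: a2; case: b2 => //= _; by rewrite ?mulrV ?mulVr.
Qed.

Lemma evw_push a t : evw (push a t) = ev_sym a * evw t.
Proof.
case: t => [|b t] //=.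
case: ifP => // /canc_ev h; by rewrite mulrA h mul1r.
Qed.

Lemma evw_red w : evw (red w) = evw w.
Proof. by elim: w => //= a w IH; rewrite evw_push IH. Qed.

Lemma evp_ins c w L : evp (ins c w L) = c%:~R * evw w + evp L.
Proof.
elim: L => [|[d v] L IH] /=.
  by case: eqP => [->|_]; rewrite /= ?mul0r ?addr0 ?add0r.
case: eqP => [->|_].
  case: eqP => [h|_] /=.
    by rewrite addrA -mulrDl -intrD h mul0r add0r.
  by rewrite intrD mulrDl addrA.
by rewrite /= IH addrCA.
Qed.

Lemma evp_norm p : evp (norm p) = evp p.
Proof. by elim: p => //= q p IH; rewrite evp_ins IH evw_red. Qed.

Lemma evp_cat p q : evp (p ++ q) = evp p + evp q.
Proof. by elim: p => /= [|a p IH]; rewrite ?add0r // IH addrA. Qed.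

Lemma evp_opp p : evp (popp p) = - evp p.
Proof. by elim: p => /= [|a p IH]; rewrite ?oppr0 // IH intrN mulNr opprD. Qed.

Lemma evw_cat u v : evw (u ++ v) = evw u * evw v.
Proof. by elim: u => /= [|a u IH]; rewrite ?mul1r // IH mulrA. Qed.

Lemma evp_mul p q : evp (pmul p q) = evp p * evp q.
Proof.
elim: p => /= [|a p IH]; first by rewrite mul0r.
rewrite evp_cat IH mulrDl; congr (_ + _).
clear IH; elim: q => /= [|b q IHq]; first by rewrite mulr0.
rewrite IHq mulrDr evw_cat intrM; congr (_ + _).
rewrite -!mulrA; congr (_ * _); rewrite !mulrA; congr (_ * _).
by rewrite mulrzl mulrzr.
Qed.

Lemma evp_exp p n : evp (pexp p n) = evp p ^+ n.
Proof.
elim: n => /= [|n IH]; first by rewrite mulr1 addr0.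
by rewrite evp_mul IH exprS.
Qed.

Lemma evp_to_poly e : evp (to_poly e) = eval e.
Proof.
elim: e => /=.
- by move=> a Ha b Hb; rewrite evp_cat Ha Hb.
- by move=> a Ha; rewrite evp_opp Ha.
- by move=> a Ha b Hb; rewrite evp_mul Ha Hb.
- by rewrite mulr1 addr0.
- by [].
- by move=> l; rewrite mulr1 mul1r addr0.
- by move=> i; rewrite mulr1 mul1r addr0.
- by move=> a Ha n; rewrite evp_exp Ha.
Qed.

Lemma nc_sound e1 e2 : norm (to_poly e1 ++ popp (to_poly e2)) == [::] ->
  eval e1 = eval e2.
Proof.
move=> /eqP h; apply/eqP; rewrite -subr_eq0 -!evp_to_poly -evp_opp -evp_cat -evp_norm h.
by [].
Qed.
End NC.

Ltac app_last l t :=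
  lazymatch l with
  | nil => constr:(t :: nil)
  | ?h :: ?tl => let r := app_last tl t in constr:(h :: r)
  end.
Ltac find_atom t env n :=
  lazymatch env with
  | nil => constr:((n, false))
  | ?h :: ?tl => lazymatch constr:((h, t)) with
                 | (?a, ?a) => constr:((n, true))
                 | _ => find_atom t tl (S n) end
  end.

Ltac reif x y t env :=
  lazymatch t with
  | (?a + ?b)%R =>
      let r := reif x y a env in
      lazymatch r with (?pa, ?env1) =>
        let r2 := reif x y b env1 in
        lazymatch r2 with (?pb, ?env2) => constr:((EAdd pa pb, env2)) end end
  | (- ?a)%R =>
      let r := reif x y a env in
      lazymatch r with (?pa, ?env1) => constr:((EOpp pa, env1)) end
  | (?a * ?b)%R =>
      let r := reif x y a env in
      lazymatch r with (?pa, ?env1) =>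
        let r2 := reif x y b env1 in
        lazymatch r2 with (?pb, ?env2) => constr:((EMul pa pb, env2)) end end
  | (?a ^+ ?n)%R =>
      let r := reif x y a env in
      lazymatch r with (?pa, ?env1) => constr:((EExp pa n, env1)) end
  | 1%R => constr:((EOne, env))
  | 0%R => constr:((EZero, env))
  | _ =>
    lazymatch constr:((t, x, y, (x^-1)%R, (y^-1)%R)) with
    | (?a, ?a, _, _, _) => constr:((ELet (false, false), env))
    | (?a, _, ?a, _, _) => constr:((ELet (true, false), env))
    | (?a, _, _, ?a, _) => constr:((ELet (false, true), env))
    | (?a, _, _, _, ?a) => constr:((ELet (true, true), env))
    | _ =>
    let r := find_atom t env 0%N in
    lazymatch r with
    | (?i, true) => constr:((EAtom i, env))
    | (?i, false) => let env' := app_last env t in constr:((EAtom i, env'))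
    end
    end
  end.

Ltac nc x y xu yu :=
  lazymatch goal with |- ?L = ?R =>
    let T := type of L in
    let r := reif x y L (@nil T) in
    lazymatch r with (?e1, ?env1) =>
      let r2 := reif x y R env1 in
      lazymatch r2 with (?e2, ?env) =>
        change (@eval _ x y env e1 = @eval _ x y env e2);
        apply: (@nc_sound _ x y xu yu env e1 e2); vm_compute; reflexivity
      end end end.


Lemma by_cert (D : unitRingType) (L R S : D) : L - R = S -> S = 0 -> L = R.
Proof. by move=> h h0; apply/eqP; rewrite -subr_eq0 h h0. Qed.

Section Main.
Variables (D : unitRingType) (x y : D).
Hypotheses (xu : x \is a GRing.unit) (yu : y \is a GRing.unit).

Definition Cm := x * y * x^-1 * y^-1.
Definition Ci := y * x * y^-1 * x^-1.
Definition t1 := x * y^-1 * x^-1 * y^-1.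
Definition t2 := y^-1 * x^-1 * y^-1.
Definition t3 := y * y * y * x^-1 * y^-1.
Definition t4 := y^-1 * y^-1.
Definition t5 := x * y^-1 * y^-1.
Definition Km := t1 + t2 + t3 + t4 + t5.
Definition E0 := y * x * y^-1 * x^-1 * y^-1 + y * x * y^-1 * y^-1.
Fixpoint E (n : nat) : D :=
  match n with
  | 0 => E0
  | 1 => y
  | (m.+1 as n1).+1 => Km * E n1 - Cm * E m
  end.

Ltac ncs := rewrite /Cm /Ci /Km /t1 /t2 /t3 /t4 /t5 /E0 /=; nc x y xu yu.

Lemma Eleft n : E n.+2 = Km * E n.+1 - Cm * E n.
Proof. by []. Qed.

Definition Wd n := E n.+2 * Cm - E n.+1 * Km + E n.

Lemma Wrec n : Wd n.+2 = Km * Wd n.+1 - Cm * Wd n.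
Proof. rewrite /Wd !Eleft. nc x y xu yu. Qed.

Lemma Wd0 : Wd 0 = 0. Proof. rewrite /Wd /=. ncs. Qed.
Lemma Wd1 : Wd 1 = 0. Proof. rewrite /Wd /=. ncs. Qed.

Lemma Wd_all n : Wd n = 0 /\ Wd n.+1 = 0.
Proof.
elim: n => [|n [h0 h1]]; first by split; [exact: Wd0 | exact: Wd1].
by split=> //; rewrite Wrec h0 h1 !mulr0 subrr.
Qed.

Lemma Eright n : E n.+2 * Cm - (E n.+1 * Km - E n) = 0.
Proof. have [h _] := Wd_all n; rewrite -[RHS]h /Wd; nc x y xu yu. Qed.

Definition Qd n := E n.+1 * Cm * E n - E n * E n.+1 - (1 - Ci).

Lemma Qd0 : Qd 0 = 0. Proof. rewrite /Qd /=. ncs. Qed.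

Lemma Qd_all n : Qd n = 0.
Proof.
elim: n => [|n IH]; first exact: Qd0.
rewrite -IH /Qd; congr (_ - _).
apply: (@by_cert _ _ _ ((E n.+2 * Cm - (E n.+1 * Km - E n)) * E n.+1
   - E n.+1 * (E n.+2 - (Km * E n.+1 - Cm * E n)))).
  nc x y xu yu.
by rewrite Eright -Eleft subrr mul0r mulr0 subrr.
Qed.

Definition Casd n := E n.+2 * Cm * E n - (E n.+1 * E n.+1 + Km).
Definition Caspd n := E n * E n.+2 - (E n.+1 * Cm * E n.+1 + Ci * Km * Ci).

Lemma Cas0 : Casd 0 = 0 /\ Caspd 0 = 0.
Proof. rewrite /Casd /Caspd /=; split; ncs. Qed.

Lemma Cas_all n : Casd n = 0 /\ Caspd n = 0.
Proof.
elim: n => [|n [hc hp]]; first exact: Cas0.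
have hl2 : E n.+2 - (Km * E n.+1 - Cm * E n) = 0 by rewrite -Eleft subrr.
have hl3 : E n.+3 - (Km * E n.+2 - Cm * E n.+1) = 0 by rewrite -Eleft subrr.
have hq1 := Qd_all n.+1. have hq0 := Qd_all n.
have hr1 := Eright n. have hr2 := Eright n.+1.
split.
  apply/eqP; rewrite subr_eq0; apply/eqP.
  apply: (@by_cert _ _ _ ((E n.+3 - (Km * E n.+2 - Cm * E n.+1)) * Cm * E n.+1
     + Km * Qd n.+1 - (E n.+2 - (Km * E n.+1 - Cm * E n)) * E n.+2 + Cm * Caspd n)).
    rewrite /Qd /Caspd /Cm /Ci. nc x y xu yu.
  by rewrite hl3 hl2 hq1 hp !mulr0 !mul0r !addr0 oppr0 addr0.
apply/eqP; rewrite subr_eq0; apply/eqP.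
apply: (@by_cert _ _ _ (E n.+1 * (E n.+3 * Cm - (E n.+2 * Km - E n.+1)) * Ci
   - Qd n.+1 * Km * Ci - E n.+2 * Cm * (E n.+2 * Cm - (E n.+1 * Km - E n)) * Ci
   + Casd n * Ci)).
  rewrite /Qd /Casd /Cm /Ci. nc x y xu yu.
by rewrite hr2 hr1 hq1 hc !mulr0 !mul0r !addr0 !oppr0 !addr0.
Qed.

Definition O n := E n.+1 * Cm * E n - 1.

Lemma Oex k : O k.+1 * Cm * O k = 1 + E k.+1 ^+ 4.
Proof.
have hl2 : E k.+2 - (Km * E k.+1 - Cm * E k) = 0 by rewrite -Eleft subrr.
have [hc _] := Cas_all k.
apply: (@by_cert _ _ _ (Qd k.+1 * Cm * (E k.+1 * Cm * E k - 1)
   + E k.+1 * E k.+2 * Cm * Qd k + E k.+1 * Casd k * E k.+1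
   - E k.+1 * (E k.+2 - (Km * E k.+1 - Cm * E k)))).
  rewrite /O /Qd /Casd /Cm /Ci. nc x y xu yu.
by rewrite !Qd_all hc hl2 !mulr0 !mul0r !addr0 oppr0 addr0.
Qed.

Definition F n := E n.+1 - t3 * E n.
Definition Bm := (t1 + t2 + t4) * t3.
Definition Kp := t1 + t2 + t4 + t5.
Definition Ar := y * y * x^-1.
Definition G n := E n.+1 - E n * Ar.
Definition Kpr := y^-1 * y^-1 * x^-1 + y^-1 * x * y^-1 * x^-1 + x * y^-1 * y^-1 * x^-1
  + x * y^-1 * x * y^-1 * x^-1.
Definition Br := Ar * (y^-1 * y^-1 * x^-1 + y^-1 * x * y^-1 * x^-1 + x * y^-1 * y^-1 * x^-1).
Definition H n := F n * Cm * E n - 1.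

Ltac unf := rewrite /Br /Kpr /Bm /Kp /Ar /Cm /Ci /Km /t1 /t2 /t3 /t4 /t5.

Lemma Frec n : F n.+1 = Bm * E n + Kp * F n.
Proof. rewrite /F Eleft; unf; nc x y xu yu. Qed.

Lemma Grec n : G n.+1 = E n * Br + G n * Kpr.
Proof.
apply: (@by_cert _ _ _ ((E n.+2 * Cm - (E n.+1 * Km - E n)) * Ci)).
  rewrite /G; unf; nc x y xu yu.
by rewrite Eright mul0r.
Qed.

Lemma Hrec n : H n.+1 = Bm * E n * Cm * E n * Ar + Bm * E n * Cm * G n + (t1 + t2 + t4) * Ar
  + Kp * H n * Ar + Kp * F n * Cm * G n.
Proof.
apply: (@by_cert _ _ _ ((F n.+1 - (Bm * E n + Kp * F n)) * Cm * E n.+1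
   - (Bm * E n + Kp * F n) * Cm * (G n - (E n.+1 - E n * Ar)))).
  rewrite /H; unf; nc x y xu yu.
by rewrite -Frec /G !subrr !mulr0 !mul0r subrr.
Qed.

Lemma Odec n : O n = t3 * E n * Cm * E n + H n.
Proof. rewrite /O /H /F; nc x y xu yu. Qed.

Lemma Edec n : E n.+1 = t3 * E n + F n.
Proof. rewrite /F; nc x y xu yu. Qed.

Lemma F1 : F 1 = x * y^-1 * x^-1 + y^-1 * x^-1.
Proof. rewrite /F /=. ncs. Qed.
Lemma G1 : G 1 = x * y^-1 * x^-1 + y^-1 * x^-1.
Proof. rewrite /G /Ar /=. ncs. Qed.
Lemma H1 : H 1 = x^-1.
Proof. rewrite /H /F /=. ncs. Qed.
Lemma O0 : O 0 = y * x * y^-1.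
Proof. rewrite /O /=. ncs. Qed.
Lemma R0E : Ci * y^-1 * (y * Cm * E 0) = E 0.
Proof. rewrite /=. ncs. Qed.
Lemma yCE0 : y * Cm * E 0 = 1 + y * x * y^-1.
Proof. rewrite /=. ncs. Qed.
Lemma CCi : Cm * Ci = 1.
Proof. ncs. Qed.
End Main.

Section Pos.
Variables (D : unitRingType) (x y : D).

Definition PP (a : D) := exists s : seq (nat * word),
  a = eval_nlaurent x y s /\ has (fun p => (0 < p.1)%N) s.

Lemma eval_word_cat u v : eval_word x y (u ++ v) = eval_word x y u * eval_word x y v.
Proof. by rewrite /eval_word big_cat. Qed.

Lemma eval_nl_cat s t : eval_nlaurent x y (s ++ t) = eval_nlaurent x y s + eval_nlaurent x y t.
Proof. by rewrite /eval_nlaurent big_cat. Qed.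

Definition pmulN (s t : seq (nat * word)) : seq (nat * word) :=
  [seq ((p.1 * q.1)%N, p.2 ++ q.2) | p <- s, q <- t].

Lemma eval_nl_mul s t : eval_nlaurent x y (pmulN s t) = eval_nlaurent x y s * eval_nlaurent x y t.
Proof.
rewrite /eval_nlaurent /pmulN big_allpairs_dep /= mulr_suml; apply: eq_bigr => p _.
rewrite mulr_sumr; apply: eq_bigr => q _ /=.
rewrite eval_word_cat natrM -!mulrA; congr (_ * _).
by rewrite !mulrA (commr_nat (eval_word x y p.2) q.1).
Qed.

Lemma PP_add a b : PP a -> PP b -> PP (a + b).
Proof.
move=> [s [-> hs]] [t [-> ht]]; exists (s ++ t); split; first by rewrite eval_nl_cat.
by rewrite has_cat hs.
Qed.

Lemma PP_mul a b : PP a -> PP b -> PP (a * b).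
Proof.
move=> [s [-> hs]] [t [-> ht]]; exists (pmulN s t); split; first by rewrite eval_nl_mul.
case/hasP: hs => p ps p0; case/hasP: ht => q qt q0.
apply/hasP; exists ((p.1 * q.1)%N, p.2 ++ q.2); last by rewrite /= muln_gt0 p0 q0.
by apply/allpairsP; exists (p, q).
Qed.

Lemma PP_letter l : PP (eval_letter x y l).
Proof.
exists [:: (1%N, [:: l])]; split => //.
by rewrite /eval_nlaurent /eval_word !big_seq1 mul1r.
Qed.

Lemma PP_x : PP x. Proof. exact: (PP_letter (false, false)). Qed.
Lemma PP_y : PP y. Proof. exact: (PP_letter (true, false)). Qed.
Lemma PP_xi : PP x^-1. Proof. exact: (PP_letter (false, true)). Qed.
Lemma PP_yi : PP y^-1. Proof. exact: (PP_letter (true, true)). Qed.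
End Pos.
Import Order.TTheory Num.Theory.

Fixpoint irr (w : sword) : bool :=
  match w with
  | a :: ((b :: _) as w') => ~~ canc a b && irr w'
  | _ => true
  end.
Definition isl (a : sym) : bool := if a is inl _ then true else false.

Lemma irr_push a t : irr t -> irr (push a t).
Proof.
case: t => [|b t] //= h.
case: ifP => [_|/negbT nc]; last by rewrite /= nc h.
by case: t h => //= c t /andP [].
Qed.

Lemma irr_red w : irr (red w).
Proof. by elim: w => //= a w IH; apply: irr_push. Qed.

Lemma isl_push a t : isl a -> all isl t -> all isl (push a t).
Proof.
case: t => [|b t] /=; first by move=> ->.
move=> ha /andP [hb ht]; case: ifP => _ //=; by rewrite ha hb ht.
Qed.

Lemma isl_red w : all isl w -> all isl (red w).
Proof. by elim: w => //= a w IH /andP [ha hw]; apply: isl_push => //; apply: IH. Qed.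

Lemma ins_sub c w L : {subset map snd (ins c w L) <= w :: map snd L}.
Proof.
elim: L => [|[d v] L IH] /=; first by case: ifP => // _ z.
case: eqP => [->|_].
  case: ifP => _ z /=; rewrite !inE; [by move=> ->; rewrite !orbT | by case/orP=> ->; rewrite ?orbT].
move=> z; rewrite /= !inE; case/orP => [->|/IH]; first by rewrite orbT.
by rewrite inE; case/orP => ->; rewrite ?orbT.
Qed.

Lemma ins_uniq c w L : uniq (map snd L) -> uniq (map snd (ins c w L)).
Proof.
elim: L => [|[d v] L IH] /=; first by case: ifP.
case/andP => hv hL; case: eqP => [e|ne].
  by case: ifP => //= _; rewrite hL andbT.
rewrite /= IH // andbT; apply/negP => /ins_sub; rewrite inE.
case/orP => [/eqP|]; [exact: ne | by apply/negP].
Qed.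

Lemma ins_pos c w L : 0 <= c -> all (fun q => 0 < q.1) L -> all (fun q => 0 < q.1) (ins c w L).
Proof.
move=> c0; elim: L => [|[d v] L IH] /=.
  by move=> _; case: eqP => //= /eqP cn; rewrite andbT lt_def cn c0.
case/andP => d0 hL; case: eqP => _.
  by case: eqP => _ //=; rewrite hL andbT ltr_wpDl.
by rewrite /= d0 IH.
Qed.

Lemma ins_nonnil c w L : 0 <= c -> all (fun q => 0 < q.1) L ->
  (0 < c) || (L != [::]) -> ins c w L != [::].
Proof.
move=> c0; case: L => [|[d v] L] /=.
  by rewrite orbF => _ cp; rewrite gt_eqF.
case/andP => d0 _ _; case: (v =P w) => _ //.
by rewrite gt_eqF // ltr_wpDl.
Qed.

Definition posq (q : int * sword) := 0 < q.1.

Lemma norm_pos p : all (fun q => 0 <= q.1) p -> all (fun q => 0 < q.1) (norm p).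
Proof. by elim: p => //= q p IH /andP [hq hp]; apply: ins_pos => //; apply: IH. Qed.

Lemma norm_nonnil p : all (fun q => 0 <= q.1) p -> has (fun q => 0 < q.1) p -> norm p != [::].
Proof.
elim: p => //= q p IH /andP [hq hp] hh; apply: ins_nonnil => //; first exact: norm_pos.
case/orP: hh => [->//|/(IH hp) ->]; by rewrite orbT.
Qed.

Lemma norm_uniq p : uniq (map snd (norm p)).
Proof. by elim: p => //= q p IH; apply: ins_uniq. Qed.

Lemma norm_words p : all (fun q => all isl q.2) p ->
  all (fun v => irr v && all isl v) (map snd (norm p)).
Proof.
elim: p => //= q p IH /andP [hq hp]; apply/allP => v /ins_sub; rewrite inE.
case/orP => [/eqP ->|hv]; first by rewrite irr_red isl_red.
by move/allP: (IH hp); apply.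
Qed.

Definition unl (v : sword) : word := [seq (if a is inl l then l else (false, false)) | a <- v].

Lemma unlK v : all isl v -> map inl (unl v) = v.
Proof. by elim: v => //= [[l|i] v IH] //= /IH ->. Qed.

Lemma irr_inl w : irr (map inl w) = reduced w.
Proof. by elim: w => //= a [|b w] IH //=; move: IH => /= ->. Qed.

Section NZ.
Variables (D : unitRingType) (x y : D).
Hypotheses (xu : x \is a GRing.unit) (yu : y \is a GRing.unit).
Hypothesis femb : free_group_ring_embeds x y.

Lemma evw_inl env w : @evw _ x y env (map inl w) = eval_word x y w.
Proof. by elim: w => [|l w IH]; rewrite /eval_word ?big_nil ?big_cons //= IH. Qed.

Lemma PP_neq0 a : @PP _ x y a -> a != 0.
Proof.
case=> s [-> hs].
pose ps : poly := [seq (Posz p.1, map inl p.2) | p <- s].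
have e1 : @evp _ x y [::] ps = eval_nlaurent x y s.
  rewrite /ps /eval_nlaurent; clear; elim: s => [|p s IH]; rewrite ?big_nil ?big_cons //=.
  by rewrite IH evw_inl.
pose N := norm ps.
have hnn : all (fun q => 0 <= q.1) ps by apply/allP => q /mapP [p _ ->].
have hpos : has (fun q => 0 < q.1) ps.
  case/hasP: hs => p ps0 p0; apply/hasP; exists (Posz p.1, map inl p.2); first exact: map_f.
  by rewrite /= ltz_nat.
have hw : all (fun v => irr v && all isl v) (map snd N).
  by apply: norm_words; apply/allP => q /mapP [p _ ->] /=; apply/allP => ? /mapP [? _ ->].
pose s' := [seq (q.1, unl q.2) | q <- N].
have esumL : forall L : poly, all (fun v => irr v && all isl v) (map snd L) ->
    \sum_(p <- [seq (q.1, unl q.2) | q <- L]) p.1%:~R * eval_word x y p.2 = @evp _ x y [::] L.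
  move=> L; elim: L => [|q N' IH]; rewrite ?big_nil ?big_cons //=.
  case/andP => /andP [_ hq] hN; rewrite IH // -(evw_inl [::]).
  by rewrite unlK.
have esum := esumL N hw.
apply/eqP => h0.
have := femb s'.
have -> : map snd s' = map unl (map snd N) by rewrite /s' -!map_comp.
have hu : uniq (map unl (map snd N)).
  rewrite map_inj_in_uniq ?norm_uniq // => u v hu hv e.
  move/allP: hw => hw; case/andP: (hw u hu) => _ /unlK <-; case/andP: (hw v hv) => _ /unlK <-.
  by rewrite e.
have hr : all reduced (map unl (map snd N)).
  apply/allP => w /mapP [v hv ->]; move/allP: hw => hw; case/andP: (hw v hv) => hi hl.
  by rewrite -irr_inl unlK.
move=> /(_ hu hr); rewrite esum /N (@evp_norm _ x y xu yu) e1 h0 => /(_ erefl).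
move=> hall; move: hall (@norm_nonnil ps hnn hpos) (@norm_pos ps hnn); rewrite /s' /N.
case: (norm ps) => // q N' /= /andP [/eqP qe _] _ /andP [q0 _].
by move: q0; rewrite qe.
Qed.
End NZ.

Arguments PP {D}. Arguments E {D}. Arguments F {D}. Arguments G {D}. Arguments H {D}.
Arguments O {D}. Arguments Cm {D}. Arguments Ci {D}.
Arguments F1 {D x y}. Arguments G1 {D x y}. Arguments H1 {D x y}. Arguments O0 {D x y}.
Arguments Edec {D x y}. Arguments Frec {D x y}. Arguments Grec {D x y}. Arguments Hrec {D x y}.
Arguments Odec {D x y}. Arguments Oex {D x y}. Arguments R0E {D x y}. Arguments yCE0 {D x y}.
Arguments CCi {D x y}. Arguments PP_neq0 {D x y}.
Arguments PP_add {D x y}. Arguments PP_mul {D x y}. Arguments PP_x {D x y}. Arguments PP_y {D x y}.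
Arguments PP_xi {D x y}. Arguments PP_yi {D x y}.

Section P.
Variables (D : unitRingType) (x y : D).
Hypotheses (xu : x \is a GRing.unit) (yu : y \is a GRing.unit).

Ltac pp := repeat first [ assumption | apply: PP_add | apply: PP_mul | apply: PP_x | apply: PP_y
  | apply: PP_xi | apply: PP_yi ].
Ltac unf := rewrite /Br /Kpr /Bm /Kp /Ar /Cm /t1 /t2 /t3 /t4 /t5.

Lemma pos_all n : PP x y (E x y n.+1) /\ PP x y (F x y n.+1) /\ PP x y (G x y n.+1)
  /\ PP x y (H x y n.+1).
Proof.
elim: n => [|n [hE [hF [hG hH]]]].
  rewrite (F1 xu yu) (G1 xu yu) (H1 xu yu) /=.
  by split; [exact: PP_y | split; [|split]]; pp.
split; first by rewrite (Edec xu yu); unf; pp.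
split; first by rewrite (Frec xu yu); unf; pp.
split; first by rewrite (Grec xu yu); unf; pp.
by rewrite (Hrec xu yu); unf; pp.
Qed.

Lemma PP_E n : PP x y (E x y n).
Proof.
case: n => [|n]; last by case: (pos_all n).
rewrite /= /E0; pp.
Qed.

Lemma PP_O n : PP x y (O x y n).
Proof.
case: n => [|n]; first by rewrite (O0 xu yu); pp.
have [_ [_ [_ hH]]] := pos_all n; have hE := PP_E n.+1.
by rewrite (Odec xu yu); unf; pp.
Qed.
End P.

Section Final.
Variables (D : unitRingType) (x y : D) (R : int -> D).
Hypotheses (hdiv : is_division_ring D) (femb : free_group_ring_embeds x y).
Hypothesis h1 : forall n : int,
  R (2 * n) * (x * y * x^-1 * y^-1) * R (2 * n - 2) = 1 + R (2 * n - 1).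
Hypothesis h2 : forall n : int,
  R (2 * n + 1) * (x * y * x^-1 * y^-1) * R (2 * n - 1) = 1 + R (2 * n) ^+ 4.
Hypotheses (hR1 : R 1 = y * x * y^-1) (hR2 : R 2 = y).

Lemma letter_neq0 l : eval_letter x y l != 0.
Proof.
apply/eqP => h0.
have := femb [:: (1%:Z, [:: l])]; rewrite /= big_seq1 /eval_word big_seq1 h0 mulr0.
by move=> /(_ erefl erefl erefl).
Qed.

Lemma xu : x \is a GRing.unit.
Proof. by apply: hdiv; exact: (letter_neq0 (false, false)). Qed.
Lemma yu : y \is a GRing.unit.
Proof. by apply: hdiv; exact: (letter_neq0 (true, false)). Qed.

Lemma cancel_right (a b u : D) : u \is a GRing.unit -> a * Cm x y * u = b * Cm x y * u -> a = b.
Proof.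
move=> hu /(mulIr hu) h.
have e t : t * Cm x y * Ci x y = t by rewrite /Cm /Ci; nc x y xu yu.
by rewrite -(e a) h e.
Qed.

Lemma R_ident k : R (2 * k)%N = E x y k /\ R (2 * k + 1)%N = O x y k.
Proof.
have hE k' : E x y k' \is a GRing.unit by apply: hdiv; apply: (PP_neq0 xu yu femb); exact: PP_E xu yu k'.
have hO k' : O x y k' \is a GRing.unit by apply: hdiv; apply: (PP_neq0 xu yu femb); exact: PP_O xu yu k'.
elim: k => [|k [he ho]].
  have hr1 : R (2 * 0 + 1)%N = O x y 0 by rewrite (O0 xu yu) /= hR1.
  split => //.
  have := h1 1; rewrite (_ : 2 * 1 = 2) // (_ : 2 - 2 = 0) // (_ : 2 - 1 = 1) // hR2.
  rewrite hR1 -(yCE0 xu yu) => h.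
  rewrite (_ : Posz (2 * 0)%N = 0) //.
  have := congr1 (fun t => Ci x y * y^-1 * t) h; rewrite /= (R0E xu yu) => h'.
  transitivity (E x y 0) => //; rewrite -h'.
  have e t : Ci x y / y * (y * (x * y / x / y) * t) = t by rewrite /Ci; nc x y xu yu.
  by rewrite e.
have eE : R (2 * k.+1)%N = E x y k.+1.
  have := h1 (k.+1)%:Z.
  rewrite (_ : 2 * (k.+1)%:Z = (2 * k.+1)%N :> int); last by lia.
  rewrite (_ : 2 * (k.+1)%:Z - 2 = (2 * k)%N :> int); last by lia.
  rewrite (_ : 2 * (k.+1)%:Z - 1 = (2 * k + 1)%N :> int); last by lia.
  rewrite he ho /O addrC subrK -/(Cm x y) => h.
  exact: (cancel_right _ _ _ (hE k) h).
split => //.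
have := h2 (k.+1)%:Z.
rewrite (_ : 2 * (k.+1)%:Z + 1 = (2 * k.+1 + 1)%N :> int); last by lia.
rewrite (_ : 2 * (k.+1)%:Z - 1 = (2 * k + 1)%N :> int); last by lia.
rewrite (_ : 2 * (k.+1)%:Z = (2 * k.+1)%N :> int); last by lia.
rewrite ho eE -(Oex xu yu) -/(Cm x y) => h.
exact: (cancel_right _ _ _ (hO k) h).
Qed.
End Final.

Theorem theorem4p12 (D : unitRingType) (x y : D) (R : int -> D) :
  is_division_ring D ->
  free_group_ring_embeds x y ->
  (forall n : int,
      R (2 * n) * (x * y * x^-1 * y^-1) * R (2 * n - 2) = 1 + R (2 * n - 1)) ->
  (forall n : int,
      R (2 * n + 1) * (x * y * x^-1 * y^-1) * R (2 * n - 1) = 1 + R (2 * n) ^+ 4) ->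
  R 1 = y * x * y^-1 ->
  R 2 = y ->
  forall n : nat, exists s : seq (nat * word), R n%:Z = eval_nlaurent x y s.
Proof.
move=> hdiv femb h1 h2 hR1 hR2 n.
have xu' := @xu D x y hdiv femb; have yu' := @yu D x y hdiv femb.
have [he ho] := @R_ident D x y R hdiv femb h1 h2 hR1 hR2 n./2.
rewrite -[n](odd_double_half n).
case: (odd n).
  have [s [hs _]] := @PP_O D x y xu' yu' n./2.
  exists s; rewrite -hs -ho; congr (R (Posz _)).
  by rewrite add1n -mul2n addn1.
have [s [hs _]] := @PP_E D x y xu' yu' n./2.
exists s; rewrite -hs -he; congr (R (Posz _)).
by rewrite add0n -mul2n.
Qed.
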